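(* Let $\mathbb G=V_1\times V_2$ and $\mathbb G'=V_1'\times V_2'$ be step-two Carnot groups. Then $\mathcal A_h(\mathbb G)=\mathcal A(V_1\times V_2)$ and $\mathcal A_h(\mathbb G')=\mathcal A(V_1'\times V_2')$ if and only if $\mathcal A_h(\mathbb G\times\mathbb G')=\mathcal A((V_1\oplus V_1')\times(V_2\oplus V_2'))$.
   Context: A step-two Carnot group is $\mathbb G=V_1\times V_2$ ($V_1,V_2$ finite-dimensional real vector spaces, $V_2\ne\{0\}$) with a bilinear skew-symmetric $[\cdot,\cdot]:V_1\times V_1\to V_2$ whose image spans $V_2$, and group law $(x,z)\cdot(x',z')=(x+x',z+z'+[x,x'])$. $\mathcal A_h(\mathbb G)$ is the space of maps $f:\mathbb G\to\mathbb R$ such that for all $(x,z)\in\mathbb G$, $y\in V_1$, $t\mapsto f((x,z)\cdot(ty,0))$ is affine; $\mathcal A(W)$ is the space of maps affine in the usual sense on a vector space $W$. The direct product $\mathbb G\times\mathbb G'$ is $(V_1\oplus V_1')\times(V_2\oplus V_2')$ with bracket $[x+x',y+y']:=[x,y]+[x',y']'$ for $x,y\in V_1$, $x',y'\in V_1'$. *)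

(* Defs.v *)
From HB Require Import structures.
From mathcomp Require Import all_boot all_order all_algebra.
From mathcomp Require Import reals.
Set Implicit Arguments. Unset Strict Implicit. Unset Printing Implicit Defensive.
Import Order.TTheory GRing.Theory Num.Theory.
Local Open Scope ring_scope.

Section Step2.
Variable R : realType.

(* [br] : V1 x V1 -> V2 makes V1 x V2 a step-two Carnot group. *)
Definition is_step2 (V1 V2 : vectType R) (br : V1 -> V1 -> V2) : Prop :=
  [/\ (forall x (a : R) y1 y2, br x (a *: y1 + y2) = a *: br x y1 + br x y2),
      (forall y (a : R) x1 x2, br (a *: x1 + x2) y = a *: br x1 y + br x2 y),
      (forall x y, br x y = - br y x),
      (forall z : V2, exists (n : nat) (c : 'I_n -> R) (x y : 'I_n -> V1),
          z = \sum_(i < n) c i *: br (x i) (y i)) &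
      (exists z : V2, z <> 0)].

Definition cmul (V1 V2 : vectType R) (br : V1 -> V1 -> V2)
  (p q : V1 * V2) : V1 * V2 :=
  (p.1 + q.1, p.2 + q.2 + br p.1 q.1).

Definition affine1 (g : R -> R) : Prop := exists a b : R, forall t, g t = a * t + b.

Definition horiz_affine (V1 V2 : vectType R) (br : V1 -> V1 -> V2)
  (f : V1 * V2 -> R) : Prop :=
  forall (p : V1 * V2) (y : V1), affine1 (fun t => f (cmul br p (t *: y, 0))).

Definition affine_map (W : lmodType R) (f : W -> R) : Prop :=
  exists (l : W -> R) (c : R),
    (forall (a : R) u v, l (a *: u + v) = a * l u + l v) /\
    (forall w, f w = l w + c).

Definition prod_br (V1 V2 V1' V2' : vectType R)
  (br : V1 -> V1 -> V2) (br' : V1' -> V1' -> V2')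
  (x y : V1 * V1') : V2 * V2' :=
  (br x.1 y.1, br' x.2 y.2).

End Step2.

(* Main.v *)
Require Import Defs.
From HB Require Import structures.
From mathcomp Require Import all_boot all_order all_algebra.
From mathcomp Require Import reals ring lra.
Set Implicit Arguments. Unset Strict Implicit. Unset Printing Implicit Defensive.
Import Order.TTheory GRing.Theory Num.Theory.
Local Open Scope ring_scope.

Definition lin (R : realType) (W : lmodType R) (l : W -> R) :=
  forall (a : R) u v, l (a *: u + v) = a * l u + l v.

Section H.
Variable R : realType.

Lemma lin0 (W : lmodType R) (l : W -> R) : lin l -> l 0 = 0.
Proof. move=> H; have := H 1 0 0; rewrite scale1r addr0 mul1r => e.
by apply: (addrI (l 0)); rewrite addr0 -e. Qed.

Lemma linD (W : lmodType R) (l : W -> R) u v : lin l -> l (u + v) = l u + l v.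
Proof. by move=> H; rewrite -{1}(scale1r u) H mul1r. Qed.

Lemma linZ (W : lmodType R) (l : W -> R) a u : lin l -> l (a *: u) = a * l u.
Proof. by move=> H; rewrite -(addr0 (a *: u)) H lin0 // addr0. Qed.

Lemma linN (W : lmodType R) (l : W -> R) u : lin l -> l (- u) = - l u.
Proof. by move=> H; rewrite -scaleN1r linZ // mulN1r. Qed.

Lemma lin_sub (W : lmodType R) (f g : W -> R) :
  lin f -> lin g -> lin (fun u => f u - g u).
Proof. by move=> Hf Hg a u v; rewrite Hf Hg; ring. Qed.

Lemma aff_lin (W : lmodType R) (f : W -> R) :
  affine_map f -> lin (fun u => f u - f 0).
Proof.
case=> l [c [Hl Hf]] a u v; rewrite !Hf (lin0 Hl) add0r Hl; ring.
Qed.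

Lemma lin_aff (W : lmodType R) (f : W -> R) c :
  lin (fun u => f u - c) -> affine_map f.
Proof. by move=> H; exists (fun u => f u - c), c; split => // w; rewrite subrK. Qed.

Lemma br_x0 (V1 V2 : vectType R) (br : V1 -> V1 -> V2) x :
  is_step2 br -> br x 0 = 0.
Proof. case=> H _ _ _ _; have := H x 1 0 0; rewrite !scale1r addr0 => e.
by apply: (addrI (br x 0)); rewrite addr0 -e. Qed.

Lemma br_0y (V1 V2 : vectType R) (br : V1 -> V1 -> V2) y :
  is_step2 br -> br 0 y = 0.
Proof. case=> _ H _ _ _; have := H y 1 0 0; rewrite !scale1r addr0 => e.
by apply: (addrI (br 0 y)); rewrite addr0 -e. Qed.

Lemma br_xZ (V1 V2 : vectType R) (br : V1 -> V1 -> V2) x t y :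
  is_step2 br -> br x (t *: y) = t *: br x y.
Proof. move=> hG; have := hG; case=> H _ _ _ _.
by rewrite -(addr0 (t *: y)) H br_x0 // addr0. Qed.

Lemma span_zero (V1 V2 : vectType R) (br : V1 -> V1 -> V2) (l : V2 -> R) :
  is_step2 br -> lin l -> (forall x y, l (br x y) = 0) -> forall z, l z = 0.
Proof.
case=> _ _ _ Hs _ Hl Hb z; have [n [c [x [y ->]]]] := Hs z.
rewrite (big_morph l (fun u v => linD u v Hl) (lin0 Hl)).
by apply: big1 => i _; rewrite linZ // Hb mulr0.
Qed.

Lemma aff_horiz (V1 V2 : vectType R) (br : V1 -> V1 -> V2) (f : V1 * V2 -> R) :
  (forall x t y, br x (t *: y) = t *: br x y) ->
  affine_map f -> horiz_affine br f.
Proof.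
move=> Hb [l [c [Hl Hf]]] p y; exists (l (y, br p.1 y)), (l p + c) => t.
rewrite Hf /cmul /= Hb.
have -> : (p.1 + t *: y, p.2 + 0 + t *: br p.1 y) = t *: (y, br p.1 y) + p.
  by rewrite /= addr0; congr (_, _); rewrite addrC.
by rewrite Hl mulrC addrA.
Qed.

End H.
Lemma pairZD (R : realType) (W1 W2 : lmodType R) (a : R) (x1 y1 : W1) (x2 y2 : W2) :
  a *: (x1, x2) + (y1, y2) = (a *: x1 + y1, a *: x2 + y2) :> W1 * W2.
Proof. by []. Qed.
Lemma pairD (R : realType) (W1 W2 : lmodType R) (x1 y1 : W1) (x2 y2 : W2) :
  (x1, x2) + (y1, y2) = (x1 + y1, x2 + y2) :> W1 * W2.
Proof. by []. Qed.
Lemma pairN (R : realType) (W1 W2 : lmodType R) (x1 : W1) (x2 : W2) :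
  - (x1, x2) = (- x1, - x2) :> W1 * W2.
Proof. by []. Qed.

Lemma lin_ext (R : realType) (W : lmodType R) (f g : W -> R) :
  lin f -> (forall x, g x = f x) -> lin g.
Proof. by move=> H e a u v; rewrite !e H. Qed.

Lemma lin_snd (R : realType) (W1 W2 : lmodType R) (l : W1 * W2 -> R) :
  lin l -> lin (fun w => l (0, w)).
Proof. by move=> H a u v; rewrite -H pairZD scaler0 addr0. Qed.
Lemma lin_fst (R : realType) (W1 W2 : lmodType R) (l : W1 * W2 -> R) :
  lin l -> lin (fun w => l (w, 0)).
Proof. by move=> H a u v; rewrite -H pairZD scaler0 addr0. Qed.

Lemma prod_br_lin (R : realType) (V1 V2 V1' V2' : vectType R)
  (br : V1 -> V1 -> V2) (br' : V1' -> V1' -> V2')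
  (hG : is_step2 br) (hG' : is_step2 br') x t y :
  prod_br br br' x (t *: y) = t *: prod_br br br' x y.
Proof. by rewrite /prod_br /= !br_xZ. Qed.
Lemma pair_ext (A B : Type) (x y : A * B) : x.1 = y.1 -> x.2 = y.2 -> x = y.
Proof. by case: x; case: y => /= ? ? ? ? -> ->. Qed.

Theorem proposition6p4 (R : realType) (V1 V2 V1' V2' : vectType R)
  (br : V1 -> V1 -> V2) (br' : V1' -> V1' -> V2')
  (hG : is_step2 br) (hG' : is_step2 br') :
  ((forall f : V1 * V2 -> R, horiz_affine br f <-> affine_map f) /\
   (forall f : V1' * V2' -> R, horiz_affine br' f <-> affine_map f))
  <->
  (forall f : (V1 * V1') * (V2 * V2') -> R,
      horiz_affine (prod_br br br') f <-> affine_map f).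
Proof.
split; last first.
  move=> HP; split=> f; (split; last by apply: aff_horiz => x t y; rewrite br_xZ).
  - move=> Hf.
    have HF : horiz_affine (prod_br br br') (fun P => f (P.1.1, P.2.1)).
      by move=> p y; exact: (Hf (p.1.1, p.2.1) y.1).
    have [l [c [Hl HFe]]] := (HP _).1 HF.
    exists (fun u => l ((u.1, 0), (u.2, 0))), c; split.
      by move=> a u v; rewrite -Hl !pairZD !scaler0 !addr0.
    by case=> a b; exact: (HFe ((a, 0), (b, 0))).
  - move=> Hf.
    have HF : horiz_affine (prod_br br br') (fun P => f (P.1.2, P.2.2)).
      by move=> p y; exact: (Hf (p.1.2, p.2.2) y.2).
    have [l [c [Hl HFe]]] := (HP _).1 HF.
    exists (fun u => l ((0, u.1), (0, u.2))), c; split.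
      by move=> a u v; rewrite -Hl !pairZD !scaler0 !addr0.
    by case=> a b; exact: (HFe ((0, a), (0, b))).
move=> [H1 H2] F; split; last first.
  by apply: aff_horiz => x t y; exact: prod_br_lin.
move=> HF.
pose E (u : V1 * V2) (u' : V1' * V2') := ((u.1, u'.1), (u.2, u'.2)).
have A : forall u', affine_map (fun u => F (E u u')).
  move=> u'; apply/H1 => p y; have [a [b Ha]] := HF (E p u') (y, 0).
  exists a, b => t; rewrite -Ha; apply: congr1.
  apply: pair_ext; apply: pair_ext => /=; rewrite ?scaler0 ?addr0 ?(br_x0 _ hG) ?(br_x0 _ hG') ?addr0 ?add0r //.

have A' : forall u, affine_map (fun u' => F (E u u')).
  move=> u; apply/H2 => p y; have [a [b Ha]] := HF (E u p) (0, y).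
  exists a, b => t; rewrite -Ha; apply: congr1.
  apply: pair_ext; apply: pair_ext => /=; rewrite ?scaler0 ?addr0 ?(br_x0 _ hG) ?(br_x0 _ hG') ?addr0 ?add0r //.
pose c := F (E 0 0).
pose h u := F (E u 0) - c.
pose h' u' := F (E 0 u') - c.
have Hh : lin h by exact: aff_lin (A 0).
have Hh' : lin h' by exact: aff_lin (A' 0).
pose B u u' := (F (E u u') - F (E 0 u')) - (F (E u 0) - F (E 0 0)).
have LB1 : forall u', lin (fun u => B u u').
  by move=> u'; apply: lin_sub; [exact: aff_lin (A u') | exact: aff_lin (A 0)].
have LB2 : forall u, lin (fun u' => B u u').
  move=> u; apply: (lin_ext (lin_sub (aff_lin (A' u)) (aff_lin (A' 0)))).
  by move=> x; rewrite /B /=; ring.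
have B1D : forall u v w, B (u + v) w = B u w + B v w by move=> u v w; exact: (linD u v (LB1 w)).
have B2D : forall u v w, B w (u + v) = B w u + B w v by move=> u v w; exact: (linD u v (LB2 w)).
have B1N : forall u w, B (- u) w = - B u w by move=> u w; exact: (linN u (LB1 w)).
have B2N : forall u w, B w (- u) = - B w u by move=> u w; exact: (linN u (LB2 w)).
have hD : forall u v, h (u + v) = h u + h v by move=> u v; exact: (linD u v Hh).
have hN : forall u, h (- u) = - h u by move=> u; exact: (linN u Hh).
have hD' : forall u v, h' (u + v) = h' u + h' v by move=> u v; exact: (linD u v Hh').
have hN' : forall u, h' (- u) = - h' u by move=> u; exact: (linN u Hh').
have FE : forall u u', F (E u u') = B u u' + h u + h' u' + c.
  by move=> u u'; rewrite /B /h /h' /c; ring.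
have key : forall x y x' y', B (y, br x y) (y', br' x' y') = 0.
  move=> x y x' y'.
  pose u := (x, 0 : V2); pose u' := (x', 0 : V2').
  pose v := (y, br x y); pose v' := (y', br' x' y').
  have [a [b Ha]] := HF (E u u') (y, y').
  have Hg : forall t, F (E (u + t *: v) (u' + t *: v')) = a * t + b.
    move=> t; rewrite -Ha; apply: congr1.
    apply: pair_ext; apply: pair_ext => /=; rewrite ?(br_xZ _ _ _ hG) ?(br_xZ _ _ _ hG') ?addr0 ?add0r //.
  have e1 := Hg 1; have e2 := Hg (-1); have e0 := Hg 0.
  rewrite !scale1r !scaleN1r !scale0r !addr0 !FE in e1 e2 e0.

  rewrite !B1D !B2D !hD !hD' in e1 e2.
  rewrite ?B1N ?B2N ?hN ?hN' ?B1D ?B2D in e1 e2.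

  lra.
have K0 : forall y y', B (y, 0) (y', 0) = 0.
  by move=> y y'; have := key 0 y 0 y'; rewrite (br_0y _ hG) (br_0y _ hG').
have splitp : forall (W1 W2 : lmodType R) (a : W1) (b : W2), (a, b) = (a, 0) + (0, b).
  by move=> W1 W2 a b; rewrite pairD addr0 add0r.
have K1 : forall y w', B (y, 0) (0, w') = 0.
  move=> y; apply: (span_zero hG'); first exact: lin_snd (LB2 _).
  move=> x' y'; have := key 0 y x' y'; rewrite (br_0y _ hG).
  by rewrite (splitp _ _ y') B2D K0 add0r.
have K2 : forall w y', B (0, w) (y', 0) = 0.
  move=> w y'; move: w; apply: (span_zero hG); first exact: lin_snd (LB1 _).
  move=> x y; have := key x y 0 y'; rewrite (br_0y _ hG').
  by rewrite (splitp _ _ y) B1D K0 add0r.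
have K3 : forall w w', B (0, w) (0, w') = 0.
  move=> w w'; move: w; apply: (span_zero hG); first exact: lin_snd (LB1 _).
  move=> x y; move: w'; apply: (span_zero hG'); first exact: lin_snd (LB2 _).
  move=> x' y'; have := key x y x' y'.
  by rewrite (splitp _ _ y) (splitp _ _ y') !B1D !B2D K0 K1 K2 !add0r.
have K : forall u u', B u u' = 0.
  case=> y w [y' w']; rewrite (splitp _ _ y) (splitp _ _ y') !B1D !B2D.
  by rewrite K0 K1 K2 K3 !addr0.
exists (fun P => h (P.1.1, P.2.1) + h' (P.1.2, P.2.2)), c; split.
  move=> a P Q.
  transitivity (h (a *: (P.1.1, P.2.1) + (Q.1.1, Q.2.1)) + h' (a *: (P.1.2, P.2.2) + (Q.1.2, Q.2.2))); first by [].
  rewrite Hh Hh'; ring.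
case=> [[x x'] [z z']]; have := FE (x, z) (x', z'); rewrite K add0r => ->.
by [].
Qed.
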